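(* Let $n\ge 1$ and $G\in\mathcal{G}_{2n}$ with $F(G)=n-1$. Then $f(G)\geq \lfloor n/2\rfloor$.
   Context: All graphs are finite and simple. $\mathcal{G}_{2n}$ denotes the set of all graphs with $2n$ vertices that have a perfect matching. For a perfect matching $M$ of $G$, a forcing set of $M$ is a subset $S\subseteq M$ contained in no other perfect matching of $G$; $f(G,M)$ is the minimum size of a forcing set of $M$. $f(G)$ and $F(G)$ are the minimum and maximum of $f(G,M)$ over all perfect matchings $M$ of $G$. *)

(* Defs.v *)
From mathcomp Require Import all_boot.
Set Implicit Arguments. Unset Strict Implicit. Unset Printing Implicit Defensive.

Definition simple_graph (T : finType) (e : rel T) : Prop :=
  symmetric e /\ irreflexive e.

Definition is_edge (T : finType) (e : rel T) (E : {set T}) : bool :=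
  [exists x, exists y, (e x y) && (E == [set x; y])].

Definition perfect_matching (T : finType) (e : rel T) (M : {set {set T}}) : bool :=
  [forall E in M, is_edge e E] &&
  [forall v : T, #|[set E in M | v \in E]| == 1].

Definition forcing_set (T : finType) (e : rel T) (M S : {set {set T}}) : bool :=
  (S \subset M) &&
  [forall M' : {set {set T}}, (perfect_matching e M' && (S \subset M')) ==> (M' == M)].

(* f(G,M): minimum size of a forcing set of M (M itself is one, giving the default). *)
Definition fGM (T : finType) (e : rel T) (M : {set {set T}}) : nat :=
  \big[minn/#|M|]_(S : {set {set T}} | forcing_set e M S) #|S|.

(* f(G): minimum of f(G,M) over perfect matchings M (default #|T| is an upper
   bound of every f(G,M), so it is irrelevant when G has a perfect matching). *)
Definition fG (T : finType) (e : rel T) : nat :=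
  \big[minn/#|T|]_(M : {set {set T}} | perfect_matching e M) fGM e M.

Definition FG (T : finType) (e : rel T) : nat :=
  \max_(M : {set {set T}} | perfect_matching e M) fGM e M.

(* Main.v *)
Require Import Defs.
From mathcomp Require Import all_boot zify.
Set Implicit Arguments. Unset Strict Implicit. Unset Printing Implicit Defensive.

Definition partner (T : finType) (e : rel T) (p : T -> T) :=
  [/\ forall x, p (p x) = x, forall x, p x != x & forall x, e x (p x)].

Definition pmof (T : finType) (p : T -> T) : {set {set T}} := [set [set x; p x] | x : T].

Lemma pmof_pm (T : finType) (e : rel T) p : partner e p -> perfect_matching e (pmof p).
Proof.
case=> pK pN pe; apply/andP; split.
  apply/forall_inP => E /imsetP [x _ ->]; apply/existsP; exists x; apply/existsP; exists (p x).
  by rewrite pe eqxx.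
apply/forallP => v; apply/cards1P; exists [set v; p v]; apply/setP => E.
rewrite !inE; apply/andP/eqP.
  case=> /imsetP [x _ ->]; rewrite !inE => /orP [/eqP ->|/eqP ->] //.
  by rewrite pK setUC.
move=> ->; split; last by rewrite !inE eqxx.
by apply/imsetP; exists v.
Qed.

Lemma pm_uniq (T : finType) (e : rel T) N E1 E2 v :
  perfect_matching e N -> E1 \in N -> E2 \in N -> v \in E1 -> v \in E2 -> E1 = E2.
Proof.
case/andP => _ /forallP /(_ v) /cards1P [E0 HE] h1 h2 v1 v2.
have : E1 \in [set E in N | v \in E] by rewrite inE h1 v1.
have : E2 \in [set E in N | v \in E] by rewrite inE h2 v2.
by rewrite HE !inE => /eqP -> /eqP ->.
Qed.

Lemma pm_partner (T : finType) (e : rel T) N :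
  simple_graph e -> perfect_matching e N -> exists p, partner e p /\ N = pmof p.
Proof.
case=> esym eirr pmN.
have ex : forall v, exists w, (w != v) && e v w && ([set v; w] \in N).
  move=> v; move: (pmN) => /andP [/forall_inP Hed /forallP /(_ v) /cards1P [E0 HE]].
  have : E0 \in [set E in N | v \in E] by rewrite HE inE.
  rewrite inE => /andP [E0N vE0].
  move: (Hed _ E0N) => /existsP [x /existsP [y /andP [exy /eqP E0e]]].
  move: vE0; rewrite E0e !inE => /orP [/eqP vx|/eqP vy].
    exists y; rewrite vx exy -E0e E0N !andbT.
    by apply/eqP => yx; move: exy; rewrite yx eirr.
  exists x; rewrite vy esym exy setUC -E0e E0N !andbT.
  by apply/eqP => yx; move: exy; rewrite yx eirr.
pose p v := xchoose (ex v).
have hp v : (p v != v) && e v (p v) && ([set v; p v] \in N) := xchooseP (ex v).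
have pK : forall x, p (p x) = x.
  move=> x; move: (hp x) (hp (p x)) => /andP [/andP [h1 _] h2] /andP [/andP [h3 _] h4].
  have i1 : p x \in [set x; p x] by rewrite !inE eqxx orbT.
  have := pm_uniq pmN h2 h4 i1 (setU11 _ _).
  move=> E; have : p (p x) \in [set x; p x] by rewrite E !inE eqxx orbT.
  by rewrite !inE (negbTE h3) orbF => /eqP.
exists p; split.
  split => // x; by move: (hp x) => /andP [/andP []].
apply/setP => E; apply/idP/imsetP.
  move=> EN; move: (pmN) => /andP [/forall_inP /(_ _ EN) /existsP [x /existsP [y /andP [_ /eqP Ee]]] _].
  have i1 : [set x; p x] \in N by move: (hp x) => /andP [].
  have i2 : x \in E by rewrite Ee !inE eqxx.
  exists x => //; exact: (pm_uniq pmN EN i1 i2 (setU11 _ _)).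
by case=> x _ ->; move: (hp x) => /andP [].
Qed.

Lemma pmof_eq (T : finType) (e : rel T) p q : partner e p -> partner e q ->
  pmof p = pmof q -> forall v, p v = q v.
Proof.
case=> pK pN _ [qK qN _] E v.
have : [set v; p v] \in pmof q by rewrite -E; apply/imsetP; exists v.
case/imsetP => u _ Hu.
have : v \in [set u; q u] by rewrite -Hu !inE eqxx.
have : p v \in [set u; q u] by rewrite -Hu !inE eqxx orbT.
rewrite !inE => /orP [/eqP pu|/eqP pu] /orP [/eqP vu|/eqP vu].
- by move: (pN v); rewrite pu vu eqxx.
- by rewrite pu vu qK.
- by rewrite pu vu.
- by move: (pN v); rewrite pu vu eqxx.
Qed.

Lemma card_pm (T : finType) (e : rel T) p : partner e p -> #|T| = 2 * #|pmof p|.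
Proof.
move=> hp; case: (hp) => pK pN _.
have pm := pmof_pm hp.
have cov : cover (pmof p) = setT.
  apply/setP => v; rewrite inE; apply/bigcupP; exists [set v; p v]; last by rewrite !inE eqxx.
  by apply/imsetP; exists v.
have tI : trivIset (pmof p).
  apply/trivIsetP => A B hA hB AB; apply/pred0P => v /=.
  apply/negP => /andP [vA vB]; move/eqP: AB; apply.
  exact: pm_uniq pm hA hB vA vB.
have := leq_card_cover (pmof p); rewrite tI cov cardsT => /leqifP /= /eqP ->.
rewrite mulnC -sum_nat_const; apply: eq_bigr => E /imsetP [x _ ->].
by rewrite cards2 eq_sym pN.
Qed.

Definition verts (T : eqType) (L : seq (T * T)) : seq T := flatten [seq [:: p.1; p.2] | p <- L].

Fixpoint swf (T : eqType) (L : seq (T * T)) (d v : T) : T :=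
  match L with
  | [::] => d
  | p :: L' => if v == p.1 then p.2 else if v == p.2 then p.1 else swf L' d v
  end.

Lemma swf_notin (T : eqType) (L : seq (T * T)) d v : v \notin verts L -> swf L d v = d.
Proof.
elim: L => //= [[x y] L IH]; rewrite /= !inE !negb_or => /and3P [vx vy vL].
by rewrite (negbTE vx) (negbTE vy) IH.
Qed.

Lemma vertsE (T : eqType) x y (L : seq (T * T)) : verts ((x, y) :: L) = x :: y :: verts L.
Proof. by []. Qed.

Lemma swf_in (T : eqType) (e : rel T) (L : seq (T * T)) d d' v :
  symmetric e -> all (fun p => e p.1 p.2) L ->
  uniq (verts L) -> v \in verts L ->
  [/\ swf L d v \in verts L, swf L d' (swf L d v) = v, swf L d v != v & e v (swf L d v)].
Proof.
move=> esym; elim: L => // [[x y] L IH] /andP [/= exy aL].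
rewrite vertsE /= !inE !negb_or => /andP [/andP [xy xL] /andP [yL uL]].
have yx : (y == x) = false by apply/negbTE; rewrite eq_sym.
case: (eqVneq v x) => [->|vx] vin.
  by rewrite /= yx eqxx.
case: (eqVneq v y) => [->|vy].
  by rewrite /= ?yx eqxx xy esym.
have vL : v \in verts L by move: vin; rewrite (negbTE vy).
have [h1 h2 h3 h4] := IH aL uL vL.
have wx : swf L d v != x by apply: contraNneq xL => <-.
have wy : swf L d v != y by apply: contraNneq yL => <-.
by rewrite /= ?(negbTE vx) ?(negbTE vy) (negbTE wx) (negbTE wy) h1 !orbT.
Qed.

Definition goalP (T : finType) (e : rel T) (n : T -> T) (W : {set T}) :=
  exists n', partner e n' /\ (forall v, v \in W -> n' v = n v) /\ exists v, n' v != n v.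

Lemma cyc_gen (T : finType) (e : rel T) n (W : {set T}) x y L :
  symmetric e -> partner e n -> all (fun p => e p.1 p.2) ((x, y) :: L) ->
  uniq (verts ((x, y) :: L)) ->
  all (fun v => n v \in verts ((x, y) :: L)) (verts ((x, y) :: L)) ->
  all (fun v => v \notin W) (verts ((x, y) :: L)) ->
  n x != y -> goalP e n W.
Proof.
set L' := (x, y) :: L => esym [nK nN ne] aL uL /allP cl /allP nW nxy.
exists (fun v => swf L' (n v) v); split; [split|split].
- move=> v; case vL: (v \in verts L').
    by have [h1 h2 _ _] := swf_in (n v) (n (swf L' (n v) v)) esym aL uL vL.
  have nvL : n v \notin verts L' by apply/negP => /cl; rewrite nK vL.
  by rewrite (swf_notin _ (negbT vL)) (swf_notin _ nvL) nK.
- move=> v; case vL: (v \in verts L').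
    by have [_ _ h3 _] := swf_in (n v) (n v) esym aL uL vL.
  by rewrite (swf_notin _ (negbT vL)).
- move=> v; case vL: (v \in verts L').
    by have [_ _ _ h4] := swf_in (n v) (n v) esym aL uL vL.
  by rewrite (swf_notin _ (negbT vL)).
- move=> v vW; rewrite swf_notin //; apply/negP => /nW; by rewrite vW.
- by exists x; rewrite /= eqxx eq_sym.
Qed.

Ltac dis1 := first [ assumption | rewrite eq_sym; assumption ].
Ltac dis n nK nN := first [ dis1 | apply: nN | rewrite eq_sym; apply: nN |
  (apply/negP => /eqP; let hh := fresh "hh" in move=> hh; move: (congr1 n hh); rewrite !nK; move/eqP; apply/negP; dis1) ].
Ltac uniq_tac n nK nN := rewrite /verts /= !inE !negb_or;
  repeat (apply/andP; split); try done; dis n nK nN.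

Lemma cyc4 (T : finType) (e : rel T) n (W : {set T}) x z :
  symmetric e -> partner e n -> (forall v, (n v \in W) = (v \in W)) ->
  z != x -> z != n x -> e (n x) z -> e (n z) x -> x \notin W -> z \notin W -> goalP e n W.
Proof.
move=> es hp nW h1 h2 e1 e2 w1 w2; case: (hp) => nK nN _.
apply: (@cyc_gen _ _ _ _ (n x) z [:: (n z, x)]) => //.
- by rewrite /= e1 e2.
- uniq_tac n nK nN.
- by rewrite /verts /= !nK !in_cons !eqxx !orbT.
- by rewrite /= !nW w1 w2.
- by rewrite nK; dis1.
Qed.

Lemma cyc6 (T : finType) (e : rel T) n (W : {set T}) x y z :
  symmetric e -> partner e n -> (forall v, (n v \in W) = (v \in W)) ->
  y != x -> y != n x -> z != x -> z != n x -> z != y -> z != n y ->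
  e (n x) y -> e (n y) z -> e (n z) x -> x \notin W -> y \notin W -> z \notin W -> goalP e n W.
Proof.
move=> es hp nW h1 h2 h3 h4 h5 h6 e1 e2 e3 w1 w2 w3; case: (hp) => nK nN _.
apply: (@cyc_gen _ _ _ _ (n x) y [:: (n y, z); (n z, x)]) => //.
- by rewrite /= e1 e2 e3.
- uniq_tac n nK nN.
- by rewrite /verts /= !nK !in_cons !eqxx !orbT.
- by rewrite /= !nW w1 w2 w3.
- by rewrite nK; dis1.
Qed.

Lemma cyc8 (T : finType) (e : rel T) n (W : {set T}) x y z w :
  symmetric e -> partner e n -> (forall v, (n v \in W) = (v \in W)) ->
  y != x -> y != n x -> z != x -> z != n x -> z != y -> z != n y ->
  w != x -> w != n x -> w != y -> w != n y -> w != z -> w != n z ->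
  e (n x) y -> e (n y) z -> e (n z) w -> e (n w) x ->
  x \notin W -> y \notin W -> z \notin W -> w \notin W -> goalP e n W.
Proof.
move=> es hp nW h1 h2 h3 h4 h5 h6 h7 h8 h9 h10 h11 h12 e1 e2 e3 e4 w1 w2 w3 w4; case: (hp) => nK nN _.
apply: (@cyc_gen _ _ _ _ (n x) y [:: (n y, z); (n z, w); (n w, x)]) => //.
- by rewrite /= e1 e2 e3 e4.
- uniq_tac n nK nN.
- by rewrite /verts /= !nK !in_cons !eqxx !orbT.
- by rewrite /= !nW w1 w2 w3 w4.
- by rewrite nK; dis1.
Qed.

Ltac fin n nK nN es nW := rewrite ?nK ?nW; first [ done | dis n nK nN | (rewrite es; done) ].
Ltac c4 X Z n nK nN es hp nW := apply: (@cyc4 _ _ n _ X Z es hp nW); fin n nK nN es nW.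
Ltac c6 X Y Z n nK nN es hp nW := apply: (@cyc6 _ _ n _ X Y Z es hp nW); fin n nK nN es nW.
Ltac c8 X Y Z U n nK nN es hp nW := apply: (@cyc8 _ _ n _ X Y Z U es hp nW); fin n nK nN es nW.
Ltac ga adj v H1 H2 n nK nN :=
  have /andP [H1 H2] := adj v ltac:(dis n nK nN) ltac:(dis n nK nN) ltac:(dis n nK nN) ltac:(dis n nK nN).

Lemma core (T : finType) (e : rel T) n (W : {set T}) a b c d :
  symmetric e -> partner e n -> (forall v, (n v \in W) = (v \in W)) ->
  b != a -> c != a -> c != b -> d != a -> d != b -> d != c ->
  a \notin W -> b \notin W -> c \notin W -> d \notin W ->
  e a b -> e c d -> e a c -> e b d ->
  (forall v, v != a -> v != b -> v != c -> v != d -> (e v a || e v b) && (e v c || e v d)) ->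
  goalP e n W.
Proof.
move=> es hp nW ba ca cb da db dc wa wb wc wd ab cd ac bd adj.
case: (hp) => nK nN ne.
case: (eqVneq (n a) b) => [na|nab].
  subst b.
  case: (eqVneq (n c) d) => [nc|ncd].
    subst d; c4 a (n c) n nK nN es hp nW.
  ga adj (n c) Hc1 Hc2 n nK nN. ga adj (n d) Hd1 Hd2 n nK nN.
  case E1: (e (n d) a); first by c4 a d n nK nN es hp nW.
  case E2: (e (n c) (n a)); first by c4 (n a) c n nK nN es hp nW.
  move: Hc1 Hd1; rewrite E1 E2 /= !orbF => Hc1 Hd1.
  by c6 a (n d) c n nK nN es hp nW.
case: (eqVneq (n a) c) => [na|nac].
  subst c.
  case: (eqVneq (n b) d) => [nb|nbd].
    subst d; c4 a (n b) n nK nN es hp nW.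
  ga adj (n b) Hb1 Hb2 n nK nN. ga adj (n d) Hd1 Hd2 n nK nN.
  case E1: (e (n b) (n a)); first by c4 (n a) b n nK nN es hp nW.
  case E2: (e (n d) a); first by c4 a d n nK nN es hp nW.
  move: Hb2 Hd1; rewrite E1 E2 /= => Hb2 Hd1.
  by c4 b d n nK nN es hp nW.
case: (eqVneq (n a) d) => [na|nad].
  subst d.
  case: (eqVneq (n b) c) => [nb|nbc].
    subst c; c4 a (n b) n nK nN es hp nW.
  ga adj (n b) Hb1 Hb2 n nK nN. ga adj (n c) Hc1 Hc2 n nK nN.
  case E1: (e (n b) (n a)); first by c4 (n a) b n nK nN es hp nW.
  case E2: (e (n c) a); first by c4 a c n nK nN es hp nW.
  move: Hb2 Hc1; rewrite E1 E2 /= !orbF => Hb2 Hc1.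
  by c4 b c n nK nN es hp nW.
ga adj (n a) Ha1 Ha2 n nK nN.
case: (eqVneq (n b) c) => [nb|nbc].
  subst c.
  ga adj (n d) Hd1 Hd2 n nK nN.
  case E1: (e (n a) (n b)); first by c4 (n b) a n nK nN es hp nW.
  case E2: (e (n d) b); first by c4 b d n nK nN es hp nW.
  move: Ha2 Hd1; rewrite E1 E2 /= !orbF => Ha2 Hd1.
  by c4 a d n nK nN es hp nW.
case: (eqVneq (n b) d) => [nb|nbd].
  subst d.
  ga adj (n c) Hc1 Hc2 n nK nN.
  case E1: (e (n a) (n b)); first by c4 (n b) a n nK nN es hp nW.
  case E2: (e (n c) b); first by c4 b c n nK nN es hp nW.
  move: Ha2 Hc1; rewrite E1 E2 /= !orbF => Ha2 Hc1.
  by c4 a c n nK nN es hp nW.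
ga adj (n b) Hb1 Hb2 n nK nN.
case: (eqVneq (n c) d) => [nc|ncd].
  subst d.
  case E1: (e (n b) c); first by c4 c b n nK nN es hp nW.
  case E2: (e (n a) (n c)); first by c4 (n c) a n nK nN es hp nW.
  move: Ha2 Hb2; rewrite E1 E2 /= !orbF => Ha2 Hb2.
  by c6 c (n b) a n nK nN es hp nW.
ga adj (n c) Hc1 Hc2 n nK nN. ga adj (n d) Hd1 Hd2 n nK nN.
case E1: (e (n a) c && e (n c) a).
  by case/andP: E1 => ? ?; c4 a c n nK nN es hp nW.
case E2: (e (n a) d && e (n d) a).
  by case/andP: E2 => ? ?; c4 a d n nK nN es hp nW.
case E3: (e (n b) c && e (n c) b).
  by case/andP: E3 => ? ?; c4 b c n nK nN es hp nW.
case E4: (e (n b) d && e (n d) b).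
  by case/andP: E4 => ? ?; c4 b d n nK nN es hp nW.
case F1: (e (n a) c).
  have G1 : e (n c) a = false by move: E1; rewrite F1.
  have G2 : e (n c) b by move: Hc1; rewrite G1.
  have G3 : e (n b) c = false by move: E3; rewrite G2 andbT.
  have G4 : e (n b) d by move: Hb2; rewrite G3.
  have G5 : e (n d) b = false by move: E4; rewrite G4.
  have G6 : e (n d) a by move: Hd1; rewrite G5 orbF.
  by c8 a c b d n nK nN es hp nW.
have F2 : e (n a) d by move: Ha2; rewrite F1.
have G1 : e (n d) a = false by move: E2; rewrite F2.
have G2 : e (n d) b by move: Hd1; rewrite G1.
have G3 : e (n b) d = false by move: E4; rewrite G2 andbT.
have G4 : e (n b) c by move: Hb2; rewrite G3 orbF.
have G5 : e (n c) b = false by move: E3; rewrite G4.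
have G6 : e (n c) a by move: Hc1; rewrite G5 orbF.
by c8 a d b c n nK nN es hp nW.
Qed.

Lemma bigmin_le (I : finType) (P : pred I) (F : I -> nat) x0 j :
  P j -> \big[minn/x0]_(i | P i) F i <= F j.
Proof.
move=> Pj; rewrite unlock; have : j \in index_enum I by rewrite mem_index_enum.
elim: (index_enum I) => //= i r IH; rewrite inE => /orP [/eqP <-|jr].
  by rewrite Pj; lia.
have := IH jr; case: (P i) => /= h; lia.
Qed.

Lemma fGM_le (T : finType) (e : rel T) M S : forcing_set e M S -> fGM e M <= #|S|.
Proof. exact: bigmin_le. Qed.

Lemma inj_p (T : finType) (e : rel T) p x y : partner e p -> p x = p y -> x = y.
Proof. by case=> pK _ _ /(congr1 p); rewrite !pK. Qed.

Lemma pair_prop (T : finType) (e : rel T) m n :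
  simple_graph e -> partner e m -> #|T| = 2 * n -> n - 1 <= fGM e (pmof m) ->
  forall x y, y != x -> y != m x -> (e x y && e (m x) (m y)) || (e x (m y) && e (m x) y).
Proof.
move=> sg hm cT hf x y yx ymx; case: (hm) => mK mN me.
case H: (_ || _) => //; exfalso.
set E1 := [set x; m x]; set E2 := [set y; m y].
set S := pmof m :\ E1 :\ E2.
have E1in : E1 \in pmof m by apply/imsetP; exists x.
have E2in : E2 \in pmof m :\ E1.
  rewrite !inE; apply/andP; split; last by apply/imsetP; exists y.
  apply/negP => /eqP h; have : y \in E1 by rewrite -h !inE eqxx.
  by rewrite !inE (negbTE yx) (negbTE ymx).
have cM := card_pm hm; rewrite cT in cM.
have cS : #|pmof m| = #|S| + 2.
  by rewrite (cardsD1 E1) E1in (cardsD1 E2 (pmof m :\ E1)) E2in /S /= !add1n addn2.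
suff fS : forcing_set e (pmof m) S.
  have := fGM_le fS; lia.
apply/andP; split.
  by apply/subsetP => E; rewrite !inE => /andP [_ /andP [_ h]].
apply/forallP => M'; apply/implyP => /andP [pmM' sub].
have [m' [hm' eM]] := pm_partner sg pmM'; subst M'.
case: (hm') => m'K m'N m'e.
have st1 : forall v, v != x -> v != m x -> v != y -> v != m y -> m' v = m v.
  move=> v h1 h2 h3 h4.
  have inS : [set v; m v] \in S.
    rewrite !inE; apply/and3P; split; last by apply/imsetP; exists v.
      apply/negP => /eqP h; have : v \in E2 by rewrite -h !inE eqxx.
      by rewrite !inE (negbTE h3) (negbTE h4).
    apply/negP => /eqP h; have : v \in E1 by rewrite -h !inE eqxx.
    by rewrite !inE (negbTE h1) (negbTE h2).
  have i1 : [set v; m' v] \in pmof m' by apply/imsetP; exists v.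
  have := pm_uniq (pmof_pm hm') (subsetP sub _ inS) i1 (setU11 _ _) (setU11 _ _).
  move=> h; have : m' v \in [set v; m v] by rewrite h !inE eqxx orbT.
  by rewrite !inE (negbTE (m'N v)) /= => /eqP.
have st2 : forall v, [|| v == x, v == m x, v == y | v == m y] ->
    [|| m' v == x, m' v == m x, m' v == y | m' v == m y].
  move=> v hv; apply/negPn/negP; rewrite !negb_or => /and4P [h1 h2 h3 h4].
  have h := st1 _ h1 h2 h3 h4; rewrite m'K in h.
  have mv : m' v = m v by rewrite {2}h mK.
  move: hv h1 h2 h3 h4; rewrite mv.
  by case/or4P => /eqP ->; rewrite ?mK eqxx ?andbF ?andbT.
have ext : forall v, m' v = m v -> m' (m v) = v.
  by move=> v <-; rewrite m'K.
have mxy : m x != m y by apply: contraNneq yx => /(inj_p hm) ->.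
have mxx : m x != x := mN x.
have myx : m y != x by apply: contraNneq ymx => <-; rewrite mK.
case/or4P: (st2 x ltac:(by rewrite eqxx)) => /eqP h.
- by move: (m'N x); rewrite h eqxx.
- have hy : m' y = m y.
    case/or4P: (st2 y ltac:(by rewrite eqxx !orbT)) => /eqP h'.
    + by move: ymx; rewrite -h -h' m'K eqxx.
    + by move: yx; rewrite -h in h'; rewrite (inj_p hm' h') eqxx.
    + by move: (m'N y); rewrite h' eqxx.
    + done.
  apply/eqP; apply: eq_imset => v; congr [set _; _].
  case: (eqVneq v x) => [->|h1] //.
  case: (eqVneq v (m x)) => [->|h2]; first by rewrite ext.
  case: (eqVneq v y) => [->|h3] //.
  case: (eqVneq v (m y)) => [->|h4]; first by rewrite ext.
  by rewrite st1.
- have exy : e x y by rewrite -h.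
  case/or4P: (st2 (m x) ltac:(by rewrite eqxx orbT)) => /eqP h'.
  + by move: ymx; rewrite -h -[m x]m'K h' eqxx.
  + by move: (m'N (m x)); rewrite h' eqxx.
  + by move: (mN x); rewrite -h in h'; rewrite (inj_p hm' h') eqxx.
  + by move: H; rewrite exy -h' m'e.
- have exy : e x (m y) by rewrite -h.
  case/or4P: (st2 (m x) ltac:(by rewrite eqxx orbT)) => /eqP h'.
  + by move: mxy; rewrite -h -[m x]m'K h' eqxx.
  + by move: (m'N (m x)); rewrite h' eqxx.
  + by move: H; rewrite exy -h' m'e !orbT.
  + by move: (mN x); rewrite -h in h'; rewrite (inj_p hm' h') eqxx.
Qed.

Definition pairP (T : finType) (e : rel T) (m : T -> T) :=
  forall x y, y != x -> y != m x -> (e x y && e (m x) (m y)) || (e x (m y) && e (m x) y).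

Lemma main_bound (T : finType) (e : rel T) m n N S :
  simple_graph e -> partner e m -> #|T| = 2 * n -> pairP e m ->
  perfect_matching e N -> forcing_set e N S -> n./2 <= #|S|.
Proof.
move=> sg hm cT pp pmN fS; case: (sg) => es eirr; case: (hm) => mK mN me.
have [nn [hn eN]] := pm_partner sg pmN; subst N.
case: (hn) => nK nN ne.
case/andP: (fS) => sub fSf.
rewrite leqNgt; apply/negP => small.
set W := cover S.
have inW : forall v, v \in W -> [set v; nn v] \in S.
  move=> v /bigcupP [E ES vE].
  have := subsetP sub _ ES; case/imsetP => u _ Eu.
  move: vE; rewrite Eu !inE => /orP [/eqP ->|/eqP ->]; first by rewrite -Eu.
  by rewrite nK setUC -Eu.
have nW : forall v, (nn v \in W) = (v \in W).
  have h : forall v, v \in W -> nn v \in W.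
    move=> v /inW ES; apply/bigcupP; exists [set v; nn v] => //; by rewrite !inE eqxx orbT.
  by move=> v; apply/idP/idP => [/h|/h //]; rewrite nK.
have cW : #|W| <= 2 * #|S|.
  have := leq_card_cover S => /leqifP; case: ifP => _ h.
    rewrite (eqP h) mulnC -sum_nat_const leq_eqVlt; apply/orP; left; apply/eqP.
    apply: eq_bigr => E ES; have := subsetP sub _ ES; case/imsetP => u _ ->.
    by rewrite cards2 eq_sym nN.
  apply: (leq_trans (ltnW h)); rewrite mulnC -sum_nat_const leq_eqVlt; apply/orP; left; apply/eqP.
  apply: eq_bigr => E ES; have := subsetP sub _ ES; case/imsetP => u _ ->.
  by rewrite cards2 eq_sym nN.
set U := ~: (W :|: m @: W).
have minj : injective m := can_inj mK.
have cU : 4 <= #|U|.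
  have := cardsC (W :|: m @: W); rewrite -/U cT cardsU.
  have := leq_imset_card m W.
  have : n./2 <= n./2 := leqnn _.
  lia.
have inU : forall v, (v \in U) = (v \notin W) && (v \notin m @: W).
  by move=> v; rewrite !inE negb_or.
have mU : forall v, v \in U -> m v \in U.
  move=> v; rewrite !inU => /andP [h1 h2]; rewrite mem_imset // h1 andbT.
  by apply: contra h2 => h; rewrite -[v]mK imset_f.
have /card_gt0P [a aU] : 0 < #|U| by lia.
have cU2 : 0 < #|U :\ a :\ m a|.
  have := cardsD1 a U; have := cardsD1 (m a) (U :\ a); rewrite aU.
  case: (m a \in U :\ a); lia.
case/card_gt0P: cU2 => c; rewrite !in_setD1 => /and3P [cma ca cUU].
have bU := mU _ aU; have dU := mU _ cUU.
have nWU : forall v, v \in U -> v \notin W by move=> v; rewrite inU => /andP [].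
have dis1 : m c != a by apply: contraNneq cma => <-; rewrite mK.
have dis2 : m c != m a by apply: contraNneq ca => /minj ->.
have adj : forall v, v != a -> v != m a -> v != c -> v != m c ->
    (e v a || e v (m a)) && (e v c || e v (m c)).
  move=> v h1 h2 h3 h4; have := pp a v h1 h2; have := pp c v h3 h4.
  case/orP => /andP [p1 p2]; case/orP => /andP [q1 q2];
    by rewrite ?(es v a) ?(es v (m a)) ?(es v c) ?(es v (m c)) ?q1 ?q2 ?p1 ?p2 ?orbT.
have G : goalP e nn W.
  case/orP: (pp a c ca cma) => /andP [e1 e2].
    apply: (core es hn nW (mN a) ca cma dis1 dis2 (mN c)); rewrite ?nWU //.
  apply: (core (a:=a) (b:=m a) (c:=m c) (d:=c) es hn nW (mN a) dis1 dis2 ca cma _); rewrite ?nWU //.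
  - by rewrite eq_sym mN.
  - by rewrite es me.
  - move=> v h1 h2 h3 h4; have := adj v h1 h2 h4 h3; by rewrite (orbC (e v c)).
case: G => n' [hn' [agree [v nv]]].
have : pmof n' == pmof nn.
  apply: (implyP (forallP fSf (pmof n'))); rewrite pmof_pm //=.
  apply/subsetP => E ES; have := subsetP sub _ ES; case/imsetP => u _ Eu.
  have uW : u \in W by apply/bigcupP; exists E => //; rewrite Eu !inE eqxx.
  by apply/imsetP; exists u => //; rewrite agree.
move/eqP => /(pmof_eq hn' hn) h.
by move: nv; rewrite h eqxx.
Qed.

Theorem corollary5p2 (n : nat) (T : finType) (e : rel T) :
  1 <= n ->
  simple_graph e ->
  #|T| = 2 * n ->
  (exists M : {set {set T}}, perfect_matching e M) ->
  FG e = n - 1 ->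
  n./2 <= fG e.
Proof.
move=> n1 sg cT exM hF.
case: (leqP n 1) => [n_le1 | n_gt1].
  by have -> : n = 1 by apply/eqP; rewrite eqn_leq n_le1 n1.
case: (pickP (fun M => perfect_matching e M && (fGM e M == n - 1))) => [M /andP [pmM /eqP hM] | none]; last first.
  exfalso; move: hF; rewrite /FG; apply/eqP.
  apply: (big_ind (fun k => k != n - 1)).
  - lia.
  - move=> x y hx hy; lia.
  - by move=> M pmM; have := none M; rewrite pmM /= => ->.
have [m [hm eM]] := pm_partner sg pmM; subst M.
have pp : pairP e m.
  apply: (pair_prop sg hm cT); lia.
rewrite /fG; apply: (big_ind (fun k => n./2 <= k)).
- rewrite cT; lia.
- by move=> x y hx hy; rewrite leq_min hx hy.
move=> N pmN; rewrite /fGM; apply: (big_ind (fun k => n./2 <= k)).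
- have [nn [hn ->]] := pm_partner sg pmN.
  have := card_pm hn; rewrite cT; lia.
- by move=> x y hx hy; rewrite leq_min hx hy.
by move=> S fS; apply: (main_bound sg hm cT pp pmN fS).
Qed.
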